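(* Let $f:2^V\to\mathbb{Z}_{\ge0}$ be a connectivity function and $C,W\subseteq V$. If $W$ disorients $C$ and $f(C)<f(W)/2$, then $(C, V\setminus C, \emptyset)$ is a $W$-improvement.
   Context: A connectivity function $f:2^V\to\mathbb{Z}_{\ge0}$ ($V$ finite) satisfies $f(\emptyset)=0$, $f(X)=f(V\setminus X)$, and $f(X\cup Y)+f(X\cap Y)\le f(X)+f(Y)$. Write $\overline{X}=V\setminus X$. The set $W$ directly orients $C$ if $f(C\cap W)<f(\overline{C}\cap W)$ and $f(C\cap\overline{W})<f(\overline{C}\cap\overline{W})$; $W$ inversely orients $C$ if it directly orients $\overline{C}$; $W$ disorients $C$ if it neither directly nor inversely orients $C$. For $W\subseteq V$, a $W$-improvement is a tripartition $(C_1,C_2,C_3)$ of $V$ (pairwise disjoint, possibly empty, union $V$) with $f(C_i)<f(W)/2$, $f(C_i\cap W)<f(W)$, $f(C_i\cap\overline{W})<f(W)$ for each $i$. *)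

(* Defs.v *)
From mathcomp Require Import all_boot.
Set Implicit Arguments. Unset Strict Implicit. Unset Printing Implicit Defensive.

Definition connectivity_function (V : finType) (f : {set V} -> nat) : Prop :=
  [/\ f set0 = 0,
      (forall X : {set V}, f X = f (~: X)) &
      (forall X Y : {set V}, f (X :|: Y) + f (X :&: Y) <= f X + f Y)].

Definition directly_orients (V : finType) (f : {set V} -> nat) (W C : {set V}) : Prop :=
  f (C :&: W) < f (~: C :&: W) /\ f (C :&: ~: W) < f (~: C :&: ~: W).

Definition inversely_orients (V : finType) (f : {set V} -> nat) (W C : {set V}) : Prop :=
  directly_orients f W (~: C).

Definition disorients (V : finType) (f : {set V} -> nat) (W C : {set V}) : Prop :=
  ~ directly_orients f W C /\ ~ inversely_orients f W C.

Definition tripartition (V : finType) (C1 C2 C3 : {set V}) : Prop :=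
  [/\ [disjoint C1 & C2], [disjoint C1 & C3], [disjoint C2 & C3]
    & C1 :|: C2 :|: C3 = setT].

(* f(X) < f(W)/2 is stated as 2 * f(X) < f(W) (exact over the rationals). *)
Definition W_improvement (V : finType) (f : {set V} -> nat) (W C1 C2 C3 : {set V}) : Prop :=
  tripartition C1 C2 C3 /\
  forall Ci, Ci \in [:: C1; C2; C3] ->
    [/\ 2 * f Ci < f W, f (Ci :&: W) < f W & f (Ci :&: ~: W) < f W].

(* Main.v *)
Require Import Defs.
From mathcomp Require Import all_boot.
From mathcomp Require Import zify.

Theorem lemma3 (V : finType) (f : {set V} -> nat) (C W : {set V}) :
  connectivity_function f ->
  disorients f W C ->
  2 * f C < f W ->
  W_improvement f W C (~: C) set0.
Proof.
case=> f0 fsym fsub [ndir ninv] hCW.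
rewrite /inversely_orients /directly_orients setCK in ninv.
rewrite /directly_orients in ndir.
have sE : forall X Y Z T : {set V}, X = Y -> Z = T -> f (X) + f Z <= f C + f W ->
   f Y + f T <= f C + f W by move=> X Y Z T -> ->.
have e1 : f (~: C :&: ~: W) + f (C :&: W) <= f C + f W.
  by rewrite (fsym (~: C :&: ~: W)) -setCU setCK; apply: fsub.
have e2 : f (~: C :&: W) + f (C :&: ~: W) <= f C + f W.
  rewrite (fsym (~: C :&: W)) -{1}(setCK W) -setCU setCK.
  by rewrite [f W]fsym; apply: fsub.
have e3 : f W <= f (C :&: W) + f (~: C :&: W).
  have := fsub (C :&: W) (~: C :&: W).
  have -> : (C :&: W) :|: (~: C :&: W) = W.
    by apply/setP=> x; rewrite !inE; case: (x \in C); case: (x \in W).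
  have -> : (C :&: W) :&: (~: C :&: W) = set0.
    by apply/setP=> x; rewrite !inE; case: (x \in C); case: (x \in W).
  by rewrite f0 addn0.
have e4 : f W <= f (C :&: ~: W) + f (~: C :&: ~: W).
  have := fsub (C :&: ~: W) (~: C :&: ~: W).
  have -> : (C :&: ~: W) :|: (~: C :&: ~: W) = ~: W.
    by apply/setP=> x; rewrite !inE; case: (x \in C); case: (x \in W).
  have -> : (C :&: ~: W) :&: (~: C :&: ~: W) = set0.
    by apply/setP=> x; rewrite !inE; case: (x \in C); case: (x \in W).
  by rewrite f0 addn0 -fsym.
have hCC : f (~: C) = f C by rewrite -fsym.
split.
  split.
  - by rewrite -setI_eq0 setICr.
  - by rewrite -setI_eq0 setI0.
  - by rewrite -setI_eq0 setI0.
  - by rewrite setU0 setUCr.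
move=> Ci; rewrite !inE => /or3P [] /eqP ->.
- split=> //.
  + apply/negPn/negP; rewrite -leqNgt => h. apply: ninv. lia.
  + apply/negPn/negP; rewrite -leqNgt => h. apply: ninv. lia.
- rewrite hCC; split=> //.
  + apply/negPn/negP; rewrite -leqNgt => h. apply: ndir. lia.
  + apply/negPn/negP; rewrite -leqNgt => h. apply: ndir. lia.
- rewrite !set0I f0; split; lia.
Qed.
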